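(* Let $\theta$ be a parameter vector and let $u_\theta(x,y)$ and $s_\theta(x,y)$ be real-valued functions of $\theta$ (differentiable in $\theta$) for each prompt $x$ and response $y$. For a fixed triple $(x,y_w,y_l)$ put $\Delta u_\theta = u_\theta(x,y_w)-u_\theta(x,y_l)$, $\mu=\sigma(\Delta u_\theta)$ where $\sigma(t)=1/(1+e^{-t})$, and let $\tau=\tau(\theta)\in(0,\infty)$ be the concentration, namely $\tau=\mathrm{Softplus}(s_\theta(x,y_w))+\mathrm{Softplus}(s_\theta(x,y_l))+1$ with $\mathrm{Softplus}(t)=\log(1+e^t)$. Let $\alpha_0,\beta_0>0$ and $\lambda>0$ be fixed constants (independent of $\theta$), set $\alpha=\mu\tau$, $\beta=(1-\mu)\tau$, and define $$\mathcal{L}_{\mathrm{ICRM}} = -\bigl(\psi(\mu\tau)-\psi(\tau)\bigr) + \lambda\, \mathbb{D}_{\mathrm{KL}}\bigl(\mathrm{Beta}(\alpha,\beta)\,\|\,\mathrm{Beta}(\alpha_0,\beta_0)\bigr).$$ Let $\varepsilon := 1-\mu$. Then, for finite $\tau\in(0,\infty)$ held fixed, as $\varepsilon\to 0^+$, $$\nabla_\theta \mathcal{L}_{\mathrm{ICRM}} = c_u\,\nabla_\theta \Delta u_\theta + c_\tau\,\nabla_\theta \tau,\qquad c_u = \frac{\lambda\beta_0}{\varepsilon\tau}+O(1),\quad c_\tau = -\frac{\lambda\beta_0}{\varepsilon\tau^2}+O(1),$$ i.e. the utility coefficient behaves to leading order like $\lambda\beta_0/(\varepsilon\tau)$ and the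 confidence coefficient like $-\lambda\beta_0/(\varepsilon\tau^2)$.
   Context: $\psi(x)=\frac{d}{dx}\log\Gamma(x)$ is the digamma function. $\mathrm{Beta}(a,b)$ denotes the Beta distribution on $[0,1]$ with parameters $a,b>0$, and $\mathbb{D}_{\mathrm{KL}}(q\|p)$ is the Kullback–Leibler divergence, which for Betas has the closed form $\mathbb{D}_{\mathrm{KL}}(\mathrm{Beta}(\alpha,\beta)\|\mathrm{Beta}(\alpha_0,\beta_0)) = \log\frac{\Gamma(\alpha+\beta)}{\Gamma(\alpha)\Gamma(\beta)}-\log\frac{\Gamma(\alpha_0+\beta_0)}{\Gamma(\alpha_0)\Gamma(\beta_0)}+(\alpha-\alpha_0)[\psi(\alpha)-\psi(\alpha+\beta)]+(\beta-\beta_0)[\psi(\beta)-\psi(\alpha+\beta)]$. The gradient $\nabla_\theta\mathcal{L}_{\mathrm{ICRM}}$ is computed by the chain rule through $\mu=\sigma(\Delta u_\theta)$ and $\tau$, i.e. $\nabla_\theta\mathcal{L}=\frac{\partial\mathcal{L}}{\partial\mu}\mu(1-\mu)\nabla_\theta\Delta u_\theta+\frac{\partial\mathcal{L}}{\partial\tau}\nabla_\theta\tau$. *)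

(* Defs.v *)
From Stdlib Require Import Reals.
From Coquelicot Require Import Coquelicot.
Open Scope R_scope.

Definition Gamma (x : R) : R :=
  RInt_gen (fun t => exp ((x - 1) * ln t) * exp (- t))
           (at_right 0) (Rbar_locally p_infty).

Definition lnGamma (x : R) : R := ln (Gamma x).

Definition digamma (x : R) : R := Derive lnGamma x.

Definition KL_beta (a b a0 b0 : R) : R :=
  ln (Gamma (a + b) / (Gamma a * Gamma b))
  - ln (Gamma (a0 + b0) / (Gamma a0 * Gamma b0))
  + (a - a0) * (digamma a - digamma (a + b))
  + (b - b0) * (digamma b - digamma (a + b)).

(* L_ICRM as a function of mu = sigma(Delta u) and the concentration tau. *)
Definition L_ICRM (a0 b0 lam mu tau : R) : R :=
  - (digamma (mu * tau) - digamma tau)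
  + lam * KL_beta (mu * tau) ((1 - mu) * tau) a0 b0.

(* Chain rule: grad L = (dL/dmu) mu(1-mu) grad(Delta u) + (dL/dtau) grad tau.
   The utility coefficient c_u and confidence coefficient c_tau. *)
Definition c_u (a0 b0 lam mu tau : R) : R :=
  Derive (fun m => L_ICRM a0 b0 lam m tau) mu * (mu * (1 - mu)).

Definition c_tau (a0 b0 lam mu tau : R) : R :=
  Derive (fun t => L_ICRM a0 b0 lam mu t) tau.

(* Main.v *)
Require Import Defs.
From Stdlib Require Import Reals Lra Psatz Classical FunctionalExtensionality.
From Coquelicot Require Import Coquelicot.
Open Scope R_scope.

Lemma ballR (x y : R) (e : posreal) : Rabs (y - x) < e -> ball x e y.
Proof. intros H. exact H. Qed.

Lemma exR (g : R -> R) a b : (forall t, 0 < t -> continuous g t) -> 0 < a -> 0 < b -> ex_RInt g a b.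
Proof.
  intros Hc Ha Hb. apply (ex_RInt_continuous (V:=R_CompleteNormedModule)). intros z Hz. apply Hc.
  assert (0 < Rmin a b) by (apply Rmin_glb_lt; lra). lra.
Qed.

Definition Bnd (g : R -> R) : Prop :=
 (forall t, 0 < t -> continuous g t) /\ (forall t, 0 < t -> 0 <= g t) /\
 (exists M, forall a, 0 < a <= 1 -> RInt g a 1 <= M) /\
 (exists M, forall b, 1 <= b -> RInt g 1 b <= M).

Lemma Bnd_left g : Bnd g -> exists l, is_RInt_gen g (at_right 0) (at_point 1) l /\
  (forall a, 0 < a <= 1 -> RInt g a 1 <= l).
Proof.
  intros [Hc [Hp [[M HM] _]]].
  set (E := fun y => exists a, 0 < a <= 1 /\ y = RInt g a 1).
  assert (HE1 : bound E). { exists M. intros y [a [Ha ->]]. now apply HM. }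
  assert (HE2 : exists y, E y). { exists (RInt g 1 1). exists 1. split; [lra|auto]. }
  destruct (completeness E HE1 HE2) as [l [Hub Hlub]].
  exists l. split.
  2:{ intros a Ha. apply Hub. exists a; auto. }
  unfold is_RInt_gen. apply filterlimi_locally. intros eps.
  assert (Hex : exists a0, 0 < a0 <= 1 /\ l - eps < RInt g a0 1).
  { apply NNPP. intros Hn.
    assert (l <= l - eps).
    { apply Hlub. intros y [a [Ha ->]]. apply Rnot_lt_le. intros Hl. apply Hn. exists a; auto. }
    destruct eps; simpl in *; lra. }
  destruct Hex as [a0 [Ha0 Hl0]].
  assert (Ha0p : 0 < a0) by lra.
  apply Filter_prod with (Q := fun a => 0 < a < a0) (R := fun b => b = 1).
  - exists (mkposreal a0 Ha0p). intros a Hb Hpos. apply Rabs_lt_between' in Hb. simpl in Hb. lra.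
  - reflexivity.
  - intros a b Ha Hb. subst b. exists (RInt g a 1). split.
    + apply (RInt_correct (V:=R_CompleteNormedModule)). apply exR; auto; lra.
    + apply ballR. simpl.
      assert (RInt g a 1 <= l) by (apply Hub; exists a; split; [lra|auto]).
      assert (RInt g a 1 = RInt g a a0 + RInt g a0 1).
      { symmetry. apply (RInt_Chasles g a a0 1); apply exR; auto; lra. }
      assert (0 <= RInt g a a0).
      { apply RInt_ge_0. lra. apply exR; auto; lra. intros x Hx; apply Hp; lra. }
      rewrite Rabs_left1; lra.
Qed.

Lemma Bnd_right g : Bnd g -> exists l, is_RInt_gen g (at_point 1) (Rbar_locally p_infty) l /\
  (forall b, 1 <= b -> RInt g 1 b <= l).
Proof.
  intros [Hc [Hp [_ [M HM]]]].
  set (E := fun y => exists b, 1 <= b /\ y = RInt g 1 b).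
  assert (HE1 : bound E). { exists M. intros y [b [Hb ->]]. now apply HM. }
  assert (HE2 : exists y, E y). { exists (RInt g 1 1). exists 1. split; [lra|auto]. }
  destruct (completeness E HE1 HE2) as [l [Hub Hlub]].
  exists l. split.
  2:{ intros b Hb. apply Hub. exists b; auto. }
  unfold is_RInt_gen. apply filterlimi_locally. intros eps.
  assert (Hex : exists b0, 1 <= b0 /\ l - eps < RInt g 1 b0).
  { apply NNPP. intros Hn.
    assert (l <= l - eps).
    { apply Hlub. intros y [b [Hb ->]]. apply Rnot_lt_le. intros Hl. apply Hn. exists b; auto. }
    destruct eps; simpl in *; lra. }
  destruct Hex as [b0 [Hb0 Hl0]].
  apply Filter_prod with (Q := fun a => a = 1) (R := fun b => b0 < b).
  - reflexivity.
  - exists b0. auto.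
  - intros a b Ha Hb. subst a. exists (RInt g 1 b). split.
    + apply (RInt_correct (V:=R_CompleteNormedModule)). apply exR; auto; lra.
    + apply ballR. simpl.
      assert (RInt g 1 b <= l) by (apply Hub; exists b; split; [lra|auto]).
      assert (RInt g 1 b = RInt g 1 b0 + RInt g b0 b).
      { symmetry. apply (RInt_Chasles g 1 b0 b); apply exR; auto; lra. }
      assert (0 <= RInt g b0 b).
      { apply RInt_ge_0. lra. apply exR; auto; lra. intros x Hx; apply Hp; lra. }
      rewrite Rabs_left1; lra.
Qed.

Definition IG (g : R -> R) (l : R) := is_RInt_gen g (at_right 0) (Rbar_locally p_infty) l.

Lemma Bnd_ex g : Bnd g -> exists l, IG g l /\
  (forall a b, 0 < a <= 1 -> 1 <= b -> RInt g a 1 + RInt g 1 b <= l).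
Proof.
  intros H. destruct (Bnd_left g H) as [l1 [H1 H1']]. destruct (Bnd_right g H) as [l2 [H2 H2']].
  exists (l1 + l2). split.
  - apply (is_RInt_gen_Chasles g 1 l1 l2 H1 H2).
  - intros a b Ha Hb. specialize (H1' a Ha). specialize (H2' b Hb). lra.
Qed.

Lemma absle x y : Rabs x <= y -> - y <= x <= y.
Proof. intros H. pose proof (Rle_abs x). pose proof (Rle_abs (- x)). rewrite Rabs_Ropp in *. lra. Qed.

Lemma FP (P : R * R -> Prop) : (forall a b, 0 < a < 1 -> 1 < b -> P (a, b)) ->
  filter_prod (at_right 0) (Rbar_locally p_infty) P.
Proof.
  intros H. apply Filter_prod with (Q := fun a => 0 < a < 1) (R := fun b => 1 < b).
  - exists (mkposreal 1 Rlt_0_1). intros a Hb Hpos. apply Rabs_lt_between' in Hb. simpl in Hb. lra.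
  - exists 1. auto.
  - intros a b Ha Hb. apply H; auto.
Qed.

Lemma Bnd_le g h : Bnd h -> (forall t, 0 < t -> continuous g t) ->
  (forall t, 0 < t -> 0 <= g t <= h t) -> Bnd g.
Proof.
  intros [Hc [Hp [[M1 H1] [M2 H2]]]] Hgc Hg. unfold Bnd. split; [auto|split].
  - intros t Ht. apply Hg. auto.
  - split.
    + exists M1. intros a Ha. apply (Rle_trans _ (RInt h a 1)); [|exact (H1 a Ha)].
      apply RInt_le; try lra; try (apply exR; auto; lra). intros x Hx; apply Hg; lra.
    + exists M2. intros b Hb. apply (Rle_trans _ (RInt h 1 b)); [|exact (H2 b Hb)].
      apply RInt_le; try lra; try (apply exR; auto; lra). intros x Hx; apply Hg; lra.
Qed.

Lemma Bnd_plus f g : Bnd f -> Bnd g -> Bnd (fun t => f t + g t).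
Proof.
  unfold Bnd; intros [Hc [Hp [[M1 H1] [M2 H2]]]] [Hc' [Hp' [[M1' H1'] [M2' H2']]]].
  split; [|split; [|split]].
  - intros t Ht. apply (continuous_plus f g); auto.
  - intros t Ht. specialize (Hp t Ht). specialize (Hp' t Ht). lra.
  - exists (M1 + M1'). intros a Ha.
    assert (E: RInt (fun t => f t + g t) a 1 = RInt f a 1 + RInt g a 1) by (apply (RInt_plus f g); apply exR; auto; lra). rewrite E.
    specialize (H1 a Ha); specialize (H1' a Ha); lra.
  - exists (M2 + M2'). intros b Hb.
    assert (E: RInt (fun t => f t + g t) 1 b = RInt f 1 b + RInt g 1 b) by (apply (RInt_plus f g); apply exR; auto; lra). rewrite E.
    specialize (H2 b Hb); specialize (H2' b Hb); lra.
Qed.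

Lemma Bnd_scal K f : 0 <= K -> Bnd f -> Bnd (fun t => K * f t).
Proof.
  unfold Bnd; intros HK [Hc [Hp [[M1 H1] [M2 H2]]]].
  split; [|split; [|split]].
  - intros t Ht. apply (continuous_mult (fun _ => K) f); auto. apply continuous_const.
  - intros t Ht. specialize (Hp t Ht). nra.
  - exists (K * M1). intros a Ha.
    assert (E: RInt (fun t => K * f t) a 1 = K * RInt f a 1) by (apply (RInt_scal f); apply exR; auto; lra). rewrite E. specialize (H1 a Ha). unfold scal; simpl; unfold mult; simpl. nra.
  - exists (K * M2). intros b Hb.
    assert (E: RInt (fun t => K * f t) 1 b = K * RInt f 1 b) by (apply (RInt_scal f); apply exR; auto; lra). rewrite E. specialize (H2 b Hb). unfold scal; simpl; unfold mult; simpl. nra.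
Qed.

Lemma dom_ex g h : Bnd h -> (forall t, 0 < t -> continuous g t) ->
  (forall t, 0 < t -> Rabs (g t) <= h t) -> exists l, IG g l.
Proof.
  intros Hh Hgc Hg.
  assert (Bh := Hh). destruct Bh as [Hc [Hp _]].
  assert (Hgh : Bnd (fun t => g t + h t)).
  { apply Bnd_le with (h := fun t => h t + h t).
    - apply Bnd_plus; auto.
    - intros t Ht. apply (continuous_plus g h); auto.
    - intros t Ht. specialize (Hg t Ht). apply absle in Hg. split; lra. }
  destruct (Bnd_ex _ Hgh) as [l1 [Hl1 _]]. destruct (Bnd_ex _ Hh) as [l2 [Hl2 _]].
  exists (minus l1 l2).
  pose proof (is_RInt_gen_minus _ _ _ _ Hl1 Hl2) as Hm.
  replace g with (fun y => minus (g y + h y) (h y)). exact Hm.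
  apply functional_extensionality; intros y. unfold minus, plus, opp; simpl. ring.
Qed.

Lemma IG_norm g h lg lh : IG g lg -> IG h lh -> (forall t, 0 < t -> Rabs (g t) <= h t) -> Rabs lg <= lh.
Proof.
  intros Hg Hh Hb.
  apply (RInt_gen_norm (Fa := at_right 0) (Fb := Rbar_locally p_infty) g h lg lh); try assumption.
  - apply FP. intros a b Ha Hb'. simpl. lra.
  - apply FP. intros a b Ha Hb' x Hx. simpl in Hx. apply Hb. lra.
Qed.

Lemma IG_unique g l : IG g l -> RInt_gen g (at_right 0) (Rbar_locally p_infty) = l.
Proof. intros H. apply is_RInt_gen_unique. exact H. Qed.

Lemma exdc (f : R -> R) x : ex_derive f x -> continuous f x.
Proof. apply (ex_derive_continuous (K:=R_AbsRing) (V:=R_NormedModule)). Qed.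

Lemma exp_le_exp x y : x <= y -> exp x <= exp y.
Proof. intros H. destruct (Rle_lt_or_eq_dec _ _ H) as [H'|H']. left; apply exp_increasing; auto. subst; lra. Qed.

Definition Pw (c t : R) := exp ((c - 1) * ln t) * exp (- t).

Lemma RInt_le_prim g F dF a b : 0 < a <= b -> (forall t, 0 < t -> continuous g t) ->
  (forall t, a <= t <= b -> is_derive F t (dF t) /\ continuous dF t /\ g t <= dF t) ->
  RInt g a b <= F b - F a.
Proof.
  intros Hab Hg H.
  assert (HI : is_RInt dF a b (minus (F b) (F a))).
  { apply (is_RInt_derive (V:=R_CompleteNormedModule)).
    - intros x Hx. rewrite Rmin_left in Hx by lra. rewrite Rmax_right in Hx by lra. apply H; lra.
    - intros x Hx. rewrite Rmin_left in Hx by lra. rewrite Rmax_right in Hx by lra. apply H; lra. }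
  assert (E : RInt dF a b = F b - F a).
  { apply (is_RInt_unique (V:=R_CompleteNormedModule)) in HI. rewrite HI. reflexivity. }
  rewrite <- E. apply RInt_le. lra. apply exR; auto; lra. eexists; eauto.
  intros x Hx. apply H; lra.
Qed.

Lemma ln_le_sub1 y : 0 < y -> ln y <= y - 1.
Proof. intros Hy. pose proof (exp_ineq1_le (ln y)). rewrite exp_ln in H by lra. lra. Qed.

Lemma exp_mul_ln c t : 0 < t -> exp ((c - 1) * ln t) = exp (c * ln t) / t.
Proof.
  intros Ht. replace ((c - 1) * ln t) with (c * ln t + - ln t) by ring.
  rewrite exp_plus, exp_Ropp, exp_ln by lra. reflexivity.
Qed.

Lemma Pw_pos c t : 0 < Pw c t.
Proof. unfold Pw. apply Rmult_lt_0_compat; apply exp_pos. Qed.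

Lemma Pw_cont c t : 0 < t -> continuous (Pw c) t.
Proof. intros Ht. apply exdc. unfold Pw. auto_derive. lra. Qed.

Lemma Bnd_Pw c : 0 < c -> Bnd (Pw c).
Proof.
  intros Hc. split; [|split; [|split]].
  - apply Pw_cont.
  - intros t _. left. apply Pw_pos.
  - exists (1 / c). intros a Ha.
    eapply Rle_trans.
    + apply (RInt_le_prim (Pw c) (fun t => exp (c * ln t) / c) (fun t => exp ((c - 1) * ln t))).
      lra. apply Pw_cont.
      intros t Ht. split; [|split].
      * auto_derive. lra. rewrite exp_mul_ln by lra. field. lra.
      * apply exdc. auto_derive. lra.
      * unfold Pw. pose proof (exp_pos ((c - 1) * ln t)).
        assert (exp (- t) <= 1). { rewrite <- exp_0. apply exp_le_exp. lra. }
        nra.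
    + rewrite ln_1, Rmult_0_r, exp_0. pose proof (exp_pos (c * ln a)).
      apply Rmult_le_reg_r with c; auto. field_simplify; try lra.
  - set (K := Rabs (c - 1) + 1).
    assert (HK : 1 <= K) by (unfold K; pose proof (Rabs_pos (c - 1)); lra).
    set (D := K * (ln (2 * K) - 1)).
    exists (2 * exp D). intros b Hb.
    eapply Rle_trans.
    + apply (RInt_le_prim (Pw c) (fun t => - 2 * exp D * exp (- t / 2)) (fun t => exp D * exp (- t / 2))).
      lra. apply Pw_cont.
      intros t Ht. split; [|split].
      * auto_derive. auto. unfold Rdiv; field.
      * apply exdc. auto_derive. auto.
      * unfold Pw. rewrite <- !exp_plus. apply exp_le_exp.
        assert (Hl : 0 <= ln t) by (rewrite <- ln_1; apply ln_le; lra).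
        assert (H1 : ln t - ln (2 * K) <= t / (2 * K) - 1).
        { rewrite <- ln_div by lra. apply ln_le_sub1. apply Rdiv_lt_0_compat; lra. }
        assert (H2 : (c - 1) * ln t <= K * ln t).
        { apply Rmult_le_compat_r; auto. unfold K. pose proof (Rle_abs (c - 1)). lra. }
        assert (H3 : K * (ln t - ln (2 * K)) <= K * (t / (2 * K) - 1)) by (apply Rmult_le_compat_l; lra).
        replace (K * (t / (2 * K) - 1)) with (t / 2 - K) in H3 by (field; lra).
        unfold D. nra.
    + pose proof (exp_pos D). pose proof (exp_pos (- b / 2)).
      assert (exp (- (1) / 2) <= exp 0) by (apply exp_le_exp; lra). rewrite exp_0 in *.
      nra.
Qed.

Lemma exp_mul1 u : exp u * exp (- u) = 1.
Proof. rewrite <- exp_plus. replace (u + - u) with 0 by ring. apply exp_0. Qed.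

Lemma expm1_bound u : 0 <= exp u - 1 - u <= u ^ 2 * exp (Rabs u).
Proof.
  pose proof (exp_ineq1_le u). pose proof (exp_ineq1_le (- u)).
  pose proof (exp_mul1 u). pose proof (exp_pos u). pose proof (exp_pos (- u)).
  split. lra.
  destruct (Rle_or_lt 0 u).
  - rewrite Rabs_right by lra.
    assert (exp u - u * exp u <= 1) by nra.
    assert (exp u - 1 <= u * exp u) by lra.
    nra.
  - rewrite Rabs_left by lra.
    assert (Hv : exp u * (1 - u) <= 1) by nra.
    assert ((exp u - 1 - u) * (1 - u) <= u ^ 2) by nra.
    assert (exp u - 1 - u <= u ^ 2) by nra.
    nra.
Qed.

Lemma expow y n : exp y ^ n = exp (INR n * y).
Proof.
  induction n. simpl. rewrite Rmult_0_l, exp_0. reflexivity.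
  rewrite S_INR. simpl pow. rewrite IHn. rewrite <- exp_plus. f_equal. ring.
Qed.

Lemma exp_abs_le c s : 0 <= c -> exp (c * Rabs s) <= exp (c * s) + exp (- (c * s)).
Proof.
  intros Hc. pose proof (exp_pos (c * s)). pose proof (exp_pos (- (c * s))).
  destruct (Rle_or_lt 0 s).
  - rewrite Rabs_right by lra. lra.
  - rewrite Rabs_left by lra. replace (c * - s) with (- (c * s)) by ring. lra.
Qed.

Lemma lnpow_bound s c m : 0 < c -> Rabs s ^ m <= (INR m / c) ^ m * (exp (c * s) + exp (- (c * s))).
Proof.
  intros Hc. destruct m as [|n].
  - simpl. pose proof (exp_ineq1_le (c * s)). pose proof (exp_ineq1_le (- (c * s))). lra.
  - set (M := INR (S n)).
    assert (HM : 0 < M) by (unfold M; apply lt_0_INR; lia).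
    assert (H1 : Rabs s <= (M / c) * exp (c * Rabs s / M)).
    { pose proof (exp_ineq1_le (c * Rabs s / M)).
      replace (Rabs s) with ((M / c) * (c * Rabs s / M)) at 1 by (field; lra).
      apply Rmult_le_compat_l. apply Rlt_le, Rdiv_lt_0_compat; lra. lra. }
    eapply Rle_trans. apply pow_incr. split. apply Rabs_pos. exact H1.
    rewrite Rpow_mult_distr, expow. fold M.
    apply Rmult_le_compat_l. apply pow_le. apply Rlt_le, Rdiv_lt_0_compat; lra.
    replace (M * (c * Rabs s / M)) with (c * Rabs s) by (field; lra).
    apply exp_abs_le; lra.
Qed.

Lemma Pw_shift x s t : Pw x t * exp (s * ln t) = Pw (x + s) t.
Proof.
  unfold Pw. replace ((x + s - 1) * ln t) with ((x - 1) * ln t + s * ln t) by ring.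
  rewrite exp_plus. ring.
Qed.

Lemma Pw_interval p q x t : p <= x <= q -> Pw x t <= Pw p t + Pw q t.
Proof.
  intros Hx. pose proof (Pw_pos p t). pose proof (Pw_pos q t). unfold Pw in *.
  pose proof (exp_pos (- t)).
  destruct (Rle_or_lt 0 (ln t)).
  - assert (exp ((x - 1) * ln t) <= exp ((q - 1) * ln t)) by (apply exp_le_exp; nra). nra.
  - assert (exp ((x - 1) * ln t) <= exp ((p - 1) * ln t)) by (apply exp_le_exp; nra). nra.
Qed.

Definition gk (k : nat) (x t : R) := ln t ^ k * Pw x t.

Definition G (k : nat) (x : R) := RInt_gen (gk k x) (at_right 0) (Rbar_locally p_infty).

Lemma gk_cont k x t : 0 < t -> continuous (gk k x) t.
Proof. intros Ht. apply exdc. unfold gk, Pw. auto_derive. lra. Qed.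

Lemma gk_bound k x c t : 0 < c -> 0 < t ->
  Rabs (gk k x t) <= (INR k / c) ^ k * (Pw (x + c) t + Pw (x + - c) t).
Proof.
  intros Hc Ht. unfold gk. rewrite Rabs_mult, <- RPow_abs.
  rewrite (Rabs_right (Pw x t)) by (left; apply Pw_pos).
  rewrite <- !Pw_shift.
  pose proof (lnpow_bound (ln t) c k Hc). pose proof (Pw_pos x t).
  replace (- c * ln t) with (- (c * ln t)) by ring.
  replace ((INR k / c) ^ k * (Pw x t * exp (c * ln t) + Pw x t * exp (- (c * ln t))))
    with (Pw x t * ((INR k / c) ^ k * (exp (c * ln t) + exp (- (c * ln t))))) by ring.
  rewrite Rmult_comm. apply Rmult_le_compat_l; lra.
Qed.

Lemma Bnd_dom K x c : 0 <= K -> 0 < x - c -> 0 < c -> Bnd (fun t => K * (Pw (x + c) t + Pw (x + - c) t)).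
Proof.
  intros HK H1 H2. apply Bnd_scal; auto. apply Bnd_plus; apply Bnd_Pw; lra.
Qed.

Lemma G_IG k x : 0 < x -> IG (gk k x) (G k x).
Proof.
  intros Hx.
  destruct (dom_ex (gk k x) _ (Bnd_dom ((INR k / (x/2)) ^ k) x (x/2) ltac:(apply pow_le; apply Rmult_le_pos; [apply pos_INR| apply Rlt_le, Rinv_0_lt_compat; lra]) ltac:(lra) ltac:(lra)))
    as [l Hl].
  - intros t Ht. apply gk_cont; auto.
  - intros t Ht. apply gk_bound; lra.
  - unfold G. rewrite (IG_unique _ _ Hl). exact Hl.
Qed.

Lemma err_bound k x h t : 0 < x -> Rabs h <= x / 4 -> 0 < t ->
  Rabs (gk k (x + h) t - gk k x t - h * gk (S k) x t) <=
  h ^ 2 * ((INR (k + 2) / (x / 4)) ^ (k + 2) *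
     (Pw (x + x / 2) t + 2 * Pw x t + Pw (x + - (x / 2)) t)).
Proof.
  intros Hx Hh Ht.
  set (L := ln t). set (P := Pw x t). set (u := h * L).
  set (K := (INR (k + 2) / (x / 4)) ^ (k + 2)).
  set (A := exp (x / 4 * L)). set (B := exp (- (x / 4 * L))).
  assert (HP : 0 < P) by apply Pw_pos.
  assert (E1 : gk k (x + h) t - gk k x t - h * gk (S k) x t = L ^ k * P * (exp u - 1 - u)).
  { unfold gk. rewrite <- Pw_shift. fold L P. unfold u. simpl pow. ring. }
  rewrite E1.
  destruct (expm1_bound u) as [Hu1 Hu2].
  rewrite Rabs_mult, Rabs_mult, (Rabs_right P) by lra. rewrite (Rabs_right (exp u - 1 - u)) by lra.
  rewrite <- RPow_abs.
  assert (HA : 0 < A) by apply exp_pos. assert (HB : 0 < B) by apply exp_pos.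
  assert (HAB : A * B = 1) by apply exp_mul1.
  assert (HK1 : Rabs L ^ (k + 2) <= K * (A + B)) by (apply lnpow_bound; lra).
  assert (HK2 : exp (Rabs u) <= A + B).
  { eapply Rle_trans; [|apply exp_abs_le; lra]. apply exp_le_exp. unfold u. rewrite Rabs_mult.
    apply Rmult_le_compat_r. apply Rabs_pos. lra. }
  assert (Hu3 : u ^ 2 = h ^ 2 * Rabs L ^ 2).
  { unfold u. rewrite pow2_abs. ring. }
  assert (HLk : 0 <= Rabs L ^ k) by (apply pow_le, Rabs_pos).
  assert (HLk2 : Rabs L ^ (k + 2) = Rabs L ^ k * Rabs L ^ 2) by (rewrite pow_add; ring).
  assert (HA2 : P * (A * A) = Pw (x + x / 2) t).
  { rewrite <- Pw_shift. fold P. f_equal. unfold A. rewrite <- exp_plus. f_equal. unfold L. field. }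
  assert (HB2 : P * (B * B) = Pw (x + - (x / 2)) t).
  { rewrite <- Pw_shift. fold P. f_equal. unfold B. rewrite <- exp_plus. f_equal. unfold L. field. }
  rewrite <- HA2, <- HB2.
  assert (S1 : Rabs L ^ k * P * (exp u - 1 - u) <= Rabs L ^ k * P * (h ^ 2 * Rabs L ^ 2 * exp (Rabs u))).
  { apply Rmult_le_compat_l. nra. rewrite <- Hu3. lra. }
  assert (S2 : Rabs L ^ k * P * (h ^ 2 * Rabs L ^ 2 * exp (Rabs u)) = h ^ 2 * P * (Rabs L ^ (k + 2) * exp (Rabs u))).
  { rewrite HLk2. ring. }
  assert (S3 : Rabs L ^ (k + 2) * exp (Rabs u) <= K * (A + B) * (A + B)).
  { apply Rmult_le_compat; auto. apply pow_le, Rabs_pos. left; apply exp_pos. }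
  assert (Hh2 : 0 <= h ^ 2 * P) by nra.
  assert (S4 : h ^ 2 * P * (Rabs L ^ (k + 2) * exp (Rabs u)) <= h ^ 2 * P * (K * (A + B) * (A + B))).
  { apply Rmult_le_compat_l; auto. }
  eapply Rle_trans. exact S1. rewrite S2. eapply Rle_trans. exact S4.
  right. replace (2 * P) with (P * (2 * (A * B))) by (rewrite HAB; ring). ring.
Qed.

Lemma G_diff_bound k x : 0 < x -> exists C, 0 <= C /\ forall h, Rabs h <= x / 4 ->
  Rabs (G k (x + h) - G k x - h * G (S k) x) <= h ^ 2 * C.
Proof.
  intros Hx.
  set (K := (INR (k + 2) / (x / 4)) ^ (k + 2)).
  assert (HK : 0 <= K).
  { apply pow_le. apply Rmult_le_pos. apply pos_INR. apply Rlt_le, Rinv_0_lt_compat; lra. }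
  set (H := fun t => K * (Pw (x + x / 2) t + 2 * Pw x t + Pw (x + - (x / 2)) t)).
  assert (BH : Bnd H).
  { unfold H. apply Bnd_scal; auto.
    apply (Bnd_plus (fun t => Pw (x + x / 2) t + 2 * Pw x t)).
    apply (Bnd_plus (Pw (x + x / 2)) (fun t => 2 * Pw x t)).
    apply Bnd_Pw; lra. apply Bnd_scal; [lra|]. apply Bnd_Pw; lra. apply Bnd_Pw; lra. }
  destruct (Bnd_ex H BH) as [lH [HlH Hpos]].
  exists lH. split.
  { specialize (Hpos 1 1 ltac:(lra) ltac:(lra)). rewrite RInt_point in Hpos. unfold zero in Hpos; simpl in Hpos. lra. }
  intros h Hh.
  assert (Hxh : 0 < x + h) by (apply absle in Hh; lra).
  pose proof (G_IG k (x + h) Hxh) as Ia. pose proof (G_IG k x Hx) as Ib. pose proof (G_IG (S k) x Hx) as Ic.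
  pose proof (is_RInt_gen_minus _ _ _ _ (is_RInt_gen_minus _ _ _ _ Ia Ib) (is_RInt_gen_scal _ h _ Ic)) as Ie.
  pose proof (is_RInt_gen_scal _ (h ^ 2) _ HlH) as Ih.
  pose proof (IG_norm _ _ _ _ Ie Ih) as Hn.
  unfold minus, plus, opp, scal in Hn; simpl in Hn; unfold mult in Hn; simpl in Hn.
  replace (G k (x + h) - G k x - h * G (S k) x) with (G k (x + h) + - G k x + - (h * G (S k) x)) by ring.
  apply Hn. intros t Ht.
  replace (gk k (x + h) t + - gk k x t + - (h * gk (S k) x t)) with (gk k (x + h) t - gk k x t - h * gk (S k) x t) by ring.
  apply err_bound; auto.
Qed.

Lemma G_deriv k x : 0 < x -> is_derive (G k) x (G (S k) x).
Proof.
  intros Hx. destruct (G_diff_bound k x Hx) as [C [HC HB]].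
  apply is_derive_Reals. intros eps Heps.
  assert (Hd : 0 < Rmin (x / 4) (eps / (C + 1))).
  { apply Rmin_glb_lt. lra. apply Rdiv_lt_0_compat; lra. }
  exists (mkposreal _ Hd). intros h Hh0 Hh. simpl in Hh.
  assert (Hh1 : Rabs h <= x / 4) by (pose proof (Rmin_l (x / 4) (eps / (C + 1))); lra).
  assert (Hh2 : Rabs h < eps / (C + 1)) by (pose proof (Rmin_r (x / 4) (eps / (C + 1))); lra).
  specialize (HB h Hh1).
  replace ((G k (x + h) - G k x) / h - G (S k) x) with ((G k (x + h) - G k x - h * G (S k) x) / h) by (field; auto).
  unfold Rdiv. rewrite Rabs_mult, Rabs_inv.
  assert (Hap : 0 < Rabs h) by (apply Rabs_pos_lt; auto).
  apply Rmult_lt_reg_r with (Rabs h); auto. rewrite Rmult_assoc, Rinv_l by lra. rewrite Rmult_1_r.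
  rewrite <- pow2_abs in HB.
  assert (Rabs h * (C + 1) < eps).
  { apply Rmult_lt_reg_r with (/ (C + 1)). apply Rinv_0_lt_compat; lra.
    rewrite Rmult_assoc, Rinv_r by lra. unfold Rdiv in Hh2. lra. }
  nra.
Qed.

Lemma locally_pos x : 0 < x -> locally x (fun y => 0 < y).
Proof.
  intros Hx. exists (mkposreal x Hx). intros y Hy. apply Rabs_lt_between' in Hy. simpl in Hy. lra.
Qed.

Lemma G_uniform k p q : 0 < p <= q -> exists M, forall x, p <= x <= q -> Rabs (G k x) <= M.
Proof.
  intros Hpq. set (c := p / 2). set (K := (INR k / c) ^ k).
  assert (HK : 0 <= K).
  { apply pow_le. apply Rmult_le_pos. apply pos_INR. apply Rlt_le, Rinv_0_lt_compat; unfold c; lra. }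
  set (H := fun t => K * ((Pw (p + c) t + Pw (q + c) t) + (Pw (p + - c) t + Pw (q + - c) t))).
  assert (BH : Bnd H).
  { unfold H. apply Bnd_scal; auto.
    apply (Bnd_plus (fun t => Pw (p + c) t + Pw (q + c) t) (fun t => Pw (p + - c) t + Pw (q + - c) t)).
    apply Bnd_plus; apply Bnd_Pw; unfold c; lra.
    apply Bnd_plus; apply Bnd_Pw; unfold c; lra. }
  destruct (Bnd_ex H BH) as [lH [HlH _]].
  exists lH. intros x Hx.
  apply (IG_norm (gk k x) H). apply G_IG; lra. exact HlH.
  intros t Ht. eapply Rle_trans. apply (gk_bound k x c t); unfold c; lra.
  unfold H. apply Rmult_le_compat_l; auto.
  pose proof (Pw_interval (p + c) (q + c) (x + c) t ltac:(lra)).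
  pose proof (Pw_interval (p + - c) (q + - c) (x + - c) t ltac:(lra)).
  lra.
Qed.

Lemma G0_lower p q : 0 < p <= q -> exists m, 0 < m /\ forall x, p <= x <= q -> m <= G 0 x.
Proof.
  intros Hpq. set (m := exp (- ((q + 1) * ln 2) + - 2)).
  exists m. split. apply exp_pos. intros x Hx.
  assert (Bg : Bnd (gk 0 x)).
  { unfold gk. simpl pow. apply Bnd_scal. lra. apply Bnd_Pw. lra. }
  destruct (Bnd_ex _ Bg) as [l [Hl Hle]].
  unfold G. rewrite (IG_unique _ _ Hl).
  specialize (Hle 1 2 ltac:(lra) ltac:(lra)). rewrite RInt_point in Hle. unfold zero in Hle; simpl in Hle.
  assert (m <= RInt (gk 0 x) 1 2).
  { replace m with (RInt (fun _ => m) 1 2).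
    2:{ rewrite RInt_const. unfold scal; simpl; unfold mult; simpl. ring. }
    apply RInt_le. lra. apply ex_RInt_const. apply exR. intros; apply gk_cont; auto. lra. lra.
    intros t Ht. unfold gk, Pw. simpl pow. rewrite Rmult_1_l. rewrite <- exp_plus. apply exp_le_exp.
    assert (H0 : 0 <= ln t) by (rewrite <- ln_1; apply ln_le; lra).
    assert (H1 : ln t <= ln 2) by (apply ln_le; lra).
    assert (Habs : Rabs (x - 1) <= q + 1) by (apply Rabs_le; lra).
    assert (H2 : - (Rabs (x - 1) * ln t) <= (x - 1) * ln t).
    { pose proof (Rle_abs (-(x - 1))). rewrite Rabs_Ropp in H. nra. }
    nra. }
  lra.
Qed.

Lemma Pw_tail c : exists D, forall t, 1 <= t -> Pw c t <= exp D * exp (- t / 2).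
Proof.
  set (K := Rabs (c - 1) + 1).
  assert (HK : 1 <= K) by (unfold K; pose proof (Rabs_pos (c - 1)); lra).
  exists (K * (ln (2 * K) - 1)). intros t Ht.
  unfold Pw. rewrite <- !exp_plus. apply exp_le_exp.
  assert (Hl : 0 <= ln t) by (rewrite <- ln_1; apply ln_le; lra).
  assert (H1 : ln t - ln (2 * K) <= t / (2 * K) - 1).
  { rewrite <- ln_div by lra. apply ln_le_sub1. apply Rdiv_lt_0_compat; lra. }
  assert (H2 : (c - 1) * ln t <= K * ln t).
  { apply Rmult_le_compat_r; auto. unfold K. pose proof (Rle_abs (c - 1)). lra. }
  assert (H3 : K * (ln t - ln (2 * K)) <= K * (t / (2 * K) - 1)) by (apply Rmult_le_compat_l; lra).
  replace (K * (t / (2 * K) - 1)) with (t / 2 - K) in H3 by (field; lra).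
  nra.
Qed.

Lemma G0_rec x : 0 < x -> G 0 (x + 1) = x * G 0 x.
Proof.
  intros Hx.
  set (f := fun t => - Pw (x + 1) t).
  assert (Hd : forall t, 0 < t -> is_derive f t (gk 0 (x + 1) t - x * gk 0 x t)).
  { intros t Ht. unfold f, gk, Pw. simpl pow. auto_derive. lra.
    replace (x + 1 - 1) with x by ring. rewrite (exp_mul_ln x t Ht). field. lra. }
  assert (HI : is_RInt_gen (Derive f) (at_right 0) (Rbar_locally p_infty) (0 - 0)).
  { apply is_RInt_gen_Derive.
    - apply FP. intros a b Ha Hb y Hy. simpl in Hy.
      assert (0 < Rmin a b) by (apply Rmin_glb_lt; lra). eexists. apply Hd. lra.
    - apply FP. intros a b Ha Hb y Hy. simpl in Hy.
      assert (0 < Rmin a b) by (apply Rmin_glb_lt; lra).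
      apply (continuous_ext_loc _ (fun t => gk 0 (x + 1) t - x * gk 0 x t)).
      + apply filter_imp with (P := fun t => 0 < t). intros t Ht. symmetry. apply is_derive_unique. apply Hd; auto.
        apply locally_pos. lra.
      + apply (continuous_minus (gk 0 (x + 1)) (fun t => x * gk 0 x t)). apply gk_cont; lra.
        apply (continuous_mult (fun _ => x) (gk 0 x)). apply continuous_const. apply gk_cont; lra.
    - apply filterlim_locally. intros eps.
      set (r := exp (ln eps / x)). assert (Hr : 0 < r) by apply exp_pos.
      exists (mkposreal r Hr). intros t Hb Ht. apply Rabs_lt_between' in Hb. simpl in Hb.
      apply ballR. unfold f, Pw. replace (x + 1 - 1) with x by ring.
      rewrite Rminus_0_r, Rabs_Ropp, Rabs_right by (left; apply Rmult_lt_0_compat; apply exp_pos).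
      assert (exp (- t) <= 1) by (rewrite <- exp_0; apply exp_le_exp; lra).
      assert (ln t < ln eps / x) by (unfold r in Hb; rewrite <- (ln_exp (ln eps / x)); apply ln_increasing; lra).
      assert (exp (x * ln t) < eps).
      { rewrite <- (exp_ln eps) by apply cond_pos. apply exp_increasing.
        apply Rmult_lt_reg_r with (/ x). apply Rinv_0_lt_compat; lra.
        replace (x * ln t * / x) with (ln t) by (field; lra). exact H0. }
      pose proof (exp_pos (x * ln t)). nra.
    - apply filterlim_locally. intros eps.
      destruct (Pw_tail (x + 1)) as [D HD].
      exists (Rmax 1 (2 * (D - ln eps))). intros t Ht.
      assert (1 <= t) by (pose proof (Rmax_l 1 (2 * (D - ln eps))); lra).
      assert (2 * (D - ln eps) < t) by (pose proof (Rmax_r 1 (2 * (D - ln eps))); lra).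
      apply ballR. unfold f. rewrite Rminus_0_r, Rabs_Ropp, Rabs_right by (left; apply Pw_pos).
      eapply Rle_lt_trans. apply HD; auto. rewrite <- exp_plus.
      rewrite <- (exp_ln eps) by apply cond_pos. apply exp_increasing. lra. }
  assert (HI2 : IG (fun t => gk 0 (x + 1) t - x * gk 0 x t) 0).
  { unfold IG. rewrite Rminus_0_r in HI. eapply is_RInt_gen_ext; [|exact HI].
    apply FP. intros a b Ha Hb y Hy. simpl in Hy.
    assert (0 < Rmin a b) by (apply Rmin_glb_lt; lra). apply is_derive_unique. apply Hd. lra. }
  assert (Hx1 : 0 < x + 1) by lra.
  pose proof (is_RInt_gen_minus _ _ _ _ (G_IG 0 (x + 1) Hx1) (is_RInt_gen_scal _ x _ (G_IG 0 x Hx))) as H3.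
  pose proof (IG_unique _ _ HI2) as U1.
  pose proof (IG_unique _ _ H3) as U2.
  unfold minus, plus, opp, scal in U2; simpl in U2; unfold mult in U2; simpl in U2.
  assert (Eq : (fun y => gk 0 (x + 1) y - x * gk 0 x y) = (fun y => gk 0 (x + 1) y + - (x * gk 0 x y))).
  { apply functional_extensionality; intros; ring. }
  rewrite Eq in U1. rewrite U1 in U2. lra.
Qed.

Lemma Gamma_G : Gamma = G 0.
Proof.
  apply functional_extensionality. intros x. unfold Gamma, G, gk. f_equal.
  apply functional_extensionality. intros t. unfold Pw. simpl. ring.
Qed.

Lemma G0_pos x : 0 < x -> 0 < G 0 x.
Proof.
  intros Hx. destruct (G0_lower x x ltac:(lra)) as [m [Hm H]]. specialize (H x ltac:(lra)). lra.
Qed.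

Lemma lnGamma_deriv x : 0 < x -> is_derive lnGamma x (G 1 x / G 0 x).
Proof.
  intros Hx. unfold lnGamma. rewrite Gamma_G.
  pose proof (G0_pos x Hx).
  pose proof (is_derive_comp ln (G 0) x _ _ (is_derive_ln (G 0 x) H) (G_deriv 0 x Hx)) as Hc.
  unfold scal in Hc; simpl in Hc; unfold mult in Hc; simpl in Hc. exact Hc.
Qed.

Lemma digamma_eq x : 0 < x -> digamma x = G 1 x / G 0 x.
Proof. intros Hx. unfold digamma. apply is_derive_unique. apply lnGamma_deriv; auto. Qed.

Definition trigamma (x : R) := Derive digamma x.

Lemma digamma_deriv x : 0 < x -> is_derive digamma x ((G 2 x * G 0 x - G 1 x * G 1 x) / G 0 x ^ 2).
Proof.
  intros Hx.
  apply (is_derive_ext_loc (fun y => G 1 y / G 0 y)).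
  - apply filter_imp with (P := fun y => 0 < y). intros y Hy. symmetry. apply digamma_eq; auto.
    apply locally_pos; auto.
  - apply is_derive_div. apply G_deriv; auto. apply G_deriv; auto. pose proof (G0_pos x Hx). lra.
Qed.

Lemma trigamma_eq x : 0 < x -> trigamma x = (G 2 x * G 0 x - G 1 x * G 1 x) / G 0 x ^ 2.
Proof. intros Hx. unfold trigamma. apply is_derive_unique. apply digamma_deriv; auto. Qed.

Lemma trigamma_bound p q : 0 < p <= q -> exists K, forall x, p <= x <= q -> Rabs (trigamma x) <= K.
Proof.
  intros Hpq.
  destruct (G_uniform 0 p q Hpq) as [M0 H0]. destruct (G_uniform 1 p q Hpq) as [M1 H1].
  destruct (G_uniform 2 p q Hpq) as [M2 H2]. destruct (G0_lower p q Hpq) as [m [Hm Hlow]].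
  exists ((M2 * M0 + M1 * M1) / (m * m)). intros x Hx.
  rewrite trigamma_eq by lra.
  specialize (H0 x Hx). specialize (H1 x Hx). specialize (H2 x Hx). specialize (Hlow x Hx).
  set (a0 := G 0 x) in *. set (a1 := G 1 x) in *. set (a2 := G 2 x) in *.
  assert (HN : Rabs (a2 * a0 - a1 * a1) <= M2 * M0 + M1 * M1).
  { eapply Rle_trans. apply Rabs_triang. rewrite Rabs_Ropp, !Rabs_mult.
    pose proof (Rabs_pos a0). pose proof (Rabs_pos a1). pose proof (Rabs_pos a2).
    apply Rplus_le_compat; apply Rmult_le_compat; auto. }
  assert (HD : m * m <= a0 ^ 2) by nra.
  unfold Rdiv. rewrite Rabs_mult, Rabs_inv, (Rabs_right (a0 ^ 2)) by nra.
  assert (0 <= M2 * M0 + M1 * M1) by (pose proof (Rabs_pos (a2 * a0 - a1 * a1)); lra).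
  apply Rmult_le_compat. apply Rabs_pos. left; apply Rinv_0_lt_compat; nra. auto.
  apply Rinv_le_contravar; nra.
Qed.

Lemma lnGamma_rec x : 0 < x -> lnGamma (x + 1) = lnGamma x + ln x.
Proof.
  intros Hx. unfold lnGamma. rewrite Gamma_G, G0_rec by auto. rewrite ln_mult; [ring | auto | apply G0_pos; auto].
Qed.

Lemma digamma_rec x : 0 < x -> digamma x = digamma (x + 1) - / x.
Proof.
  intros Hx. unfold digamma at 1. apply is_derive_unique.
  apply (is_derive_ext_loc (fun y => lnGamma (y + 1) - ln y)).
  - apply filter_imp with (P := fun y => 0 < y). intros y Hy. simpl. rewrite lnGamma_rec by auto. lra.
    apply locally_pos; auto.
  - apply (is_derive_minus (fun y => lnGamma (y + 1)) ln).
    + assert (Hd : is_derive (fun y : R => y + 1) x 1).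
      { auto_derive. auto. ring. }
      pose proof (is_derive_comp lnGamma (fun y => y + 1) x _ _ (lnGamma_deriv (x + 1) ltac:(lra)) Hd) as Hc.
      unfold scal in Hc; simpl in Hc; unfold mult in Hc; simpl in Hc. rewrite Rmult_1_l in Hc.
      rewrite digamma_eq by lra. exact Hc.
    + apply is_derive_ln; auto.
Qed.

Lemma trigamma_rec x : 0 < x -> trigamma x = trigamma (x + 1) + / x ^ 2.
Proof.
  intros Hx. unfold trigamma at 1. apply is_derive_unique.
  apply (is_derive_ext_loc (fun y => digamma (y + 1) - / y)).
  - apply filter_imp with (P := fun y => 0 < y). intros y Hy. symmetry. apply digamma_rec; auto.
    apply locally_pos; auto.
  - replace (trigamma (x + 1) + / x ^ 2) with (trigamma (x + 1) - (- 1 / x ^ 2)) by (field; lra).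
    apply (is_derive_minus (fun y => digamma (y + 1)) (fun y => / y)).
    + assert (Hd : is_derive (fun y : R => y + 1) x 1).
      { auto_derive. auto. ring. }
      pose proof (is_derive_comp digamma (fun y => y + 1) x _ _ (digamma_deriv (x + 1) ltac:(lra)) Hd) as Hc.
      unfold scal in Hc; simpl in Hc; unfold mult in Hc; simpl in Hc. rewrite Rmult_1_l in Hc.
      rewrite trigamma_eq by lra. exact Hc.
    + apply (is_derive_inv (fun y => y)). apply (is_derive_id (K:=R_AbsRing)). lra.
Qed.

Lemma lnGamma_ex x : 0 < x -> is_derive lnGamma x (digamma x).
Proof. intros Hx. rewrite digamma_eq by auto. apply lnGamma_deriv; auto. Qed.

Lemma digamma_ex x : 0 < x -> is_derive digamma x (trigamma x).
Proof. intros Hx. rewrite trigamma_eq by auto. apply digamma_deriv; auto. Qed.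

Lemma Gamma_pos x : 0 < x -> 0 < Gamma x.
Proof. intros Hx. rewrite Gamma_G. apply G0_pos; auto. Qed.

Definition C0 a0 b0 := ln (Gamma (a0 + b0) / (Gamma a0 * Gamma b0)).

Definition Lm a0 b0 lam tau m :=
  - (digamma (m * tau) - digamma tau) + lam * (lnGamma tau - lnGamma (m * tau) - lnGamma ((1 - m) * tau) - C0 a0 b0
    + (m * tau - a0) * (digamma (m * tau) - digamma tau)
    + ((1 - m) * tau - b0) * (digamma ((1 - m) * tau) - digamma tau)).

Lemma L_eq a0 b0 lam m tau : 0 < m * tau -> 0 < (1 - m) * tau ->
  L_ICRM a0 b0 lam m tau = Lm a0 b0 lam tau m.
Proof.
  intros H1 H2. unfold L_ICRM, Lm, KL_beta, C0.
  replace (m * tau + (1 - m) * tau) with tau by ring.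
  assert (0 < tau) by nra.
  pose proof (Gamma_pos _ H1). pose proof (Gamma_pos _ H2). pose proof (Gamma_pos _ H).
  unfold lnGamma. rewrite ln_div, ln_mult; auto. ring. apply Rmult_lt_0_compat; auto.
Qed.

Lemma Lm_deriv a0 b0 lam tau m : 0 < tau -> 0 < m < 1 ->
  is_derive (Lm a0 b0 lam tau) m
   (- tau * trigamma (m * tau) + lam * tau * ((m * tau - a0) * trigamma (m * tau)
       - ((1 - m) * tau - b0) * trigamma ((1 - m) * tau))).
Proof.
  intros Ht Hm. unfold Lm. auto_derive.
  - replace (1 + - m) with (1 - m) by ring. assert (0 < m * tau) by nra. assert (0 < (1 - m) * tau) by nra. repeat split; match goal with  | |- ex_derive (fun x => digamma x) _ => eexists; apply digamma_ex; auto  | |- ex_derive (fun x => lnGamma x) _ => eexists; apply lnGamma_ex; auto  end. 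
  - replace (1 + - m) with (1 - m) by ring. change (fun x => digamma x) with digamma. change (fun x => lnGamma x) with lnGamma. unfold trigamma, digamma. ring.
Qed.

Lemma Lt_deriv a0 b0 lam tau m : 0 < tau -> 0 < m < 1 ->
  is_derive (fun t => Lm a0 b0 lam t m) tau
   (- (m * trigamma (m * tau) - trigamma tau) + lam * ((m * tau - a0) * (m * trigamma (m * tau) - trigamma tau)
       + ((1 - m) * tau - b0) * ((1 - m) * trigamma ((1 - m) * tau) - trigamma tau))).
Proof.
  intros Ht Hm. unfold Lm, C0. auto_derive.
 - assert (0 < m * tau) by (apply Rmult_lt_0_compat; lra). assert (0 < (1 - m) * tau) by (apply Rmult_lt_0_compat; lra). repeat split; match goal with  | |- ex_derive (fun x => digamma x) _ => eexists; apply digamma_ex; auto  | |- ex_derive (fun x => lnGamma x) _ => eexists; apply lnGamma_ex; auto  end. 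
 - change (fun x => digamma x) with digamma. change (fun x => lnGamma x) with lnGamma. unfold trigamma, digamma. ring. Qed.

Lemma locally_between lo hi x : lo < x < hi -> locally x (fun y => lo < y < hi).
Proof.
  intros H. assert (Hr : 0 < Rmin (x - lo) (hi - x)) by (apply Rmin_glb_lt; lra).
  exists (mkposreal _ Hr). intros y Hy. apply Rabs_lt_between' in Hy. simpl in Hy.
  pose proof (Rmin_l (x - lo) (hi - x)). pose proof (Rmin_r (x - lo) (hi - x)). lra.
Qed.

Lemma abs_prod_le c T s K S : 0 <= c -> Rabs T <= K -> Rabs s <= S -> Rabs (c * T * s) <= c * K * S.
Proof.
  intros Hc HT Hs. rewrite !Rabs_mult, (Rabs_right c) by lra.
  pose proof (Rabs_pos T). pose proof (Rabs_pos s).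
  apply Rmult_le_compat; auto. apply Rmult_le_pos; auto. apply Rmult_le_compat_l; auto.
Qed.

Lemma abs5 x1 x2 x3 x4 x5 : Rabs (x1 + x2 + x3 + x4 + x5) <= Rabs x1 + Rabs x2 + Rabs x3 + Rabs x4 + Rabs x5.
Proof.
  eapply Rle_trans. apply Rabs_triang. apply Rplus_le_compat_r.
  eapply Rle_trans. apply Rabs_triang. apply Rplus_le_compat_r.
  eapply Rle_trans. apply Rabs_triang. apply Rplus_le_compat_r.
  apply Rabs_triang.
Qed.

Theorem lemma8p1 (a0 b0 lam tau : R) :
  0 < a0 -> 0 < b0 -> 0 < lam -> 0 < tau ->
  exists C delta : R, 0 < delta /\
    forall eps : R, 0 < eps < delta ->
      Rabs (c_u a0 b0 lam (1 - eps) tau - lam * b0 / (eps * tau)) <= C /\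
      Rabs (c_tau a0 b0 lam (1 - eps) tau + lam * b0 / (eps * tau ^ 2)) <= C.
Proof.
  intros Ha0 Hb0 Hlam Htau.
  destruct (trigamma_bound 1 2 ltac:(lra)) as [K1 HK1].
  destruct (trigamma_bound (tau / 2) tau ltac:(lra)) as [Ka HKa].
  assert (HK1p : 0 <= K1).
  { assert (H1 : 1 <= 1 <= 2) by lra. pose proof (HK1 1 H1) as H2. pose proof (Rabs_pos (trigamma 1)) as H3. lra. }
  assert (HKap : 0 <= Ka).
  { assert (H1 : tau / 2 <= tau <= tau) by lra. pose proof (HKa tau H1) as H2. apply Rle_trans with (Rabs (trigamma tau)); [apply Rabs_pos | exact H2]. }
  set (Cu := tau * Ka * 1 + (lam * tau) * Ka * (tau + a0) + (lam * tau) * K1 * (tau + b0) + lam + lam * b0 / tau).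
  set (Ct := 1 * (2 * Ka) * 1 + lam * (2 * Ka) * (tau + a0) + lam * K1 * (tau + b0) + lam / tau + lam * Ka * (tau + b0)).
  assert (HCu : 0 <= Cu).
  { unfold Cu. assert (Hq : 0 <= lam * b0 / tau) by (apply Rmult_le_pos; [nra| apply Rlt_le, Rinv_0_lt_compat; lra]).
    revert Hq. generalize (lam * b0 / tau). intros q Hq. repeat apply Rplus_le_le_0_compat; repeat apply Rmult_le_pos; lra. }
  assert (HCt : 0 <= Ct).
  { unfold Ct. assert (Hq : 0 <= lam / tau) by (apply Rmult_le_pos; [nra| apply Rlt_le, Rinv_0_lt_compat; lra]).
    revert Hq. generalize (lam / tau). intros q Hq. repeat apply Rplus_le_le_0_compat; repeat apply Rmult_le_pos; lra. }
  exists (Cu + Ct), (Rmin (1 / 2) (1 / tau)). split.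
  { apply Rmin_glb_lt. lra. apply Rdiv_lt_0_compat; lra. }
  intros eps [He1 He2].
  assert (He3 : eps < 1 / 2) by (pose proof (Rmin_l (1 / 2) (1 / tau)); lra).
  assert (He4 : eps * tau < 1).
  { assert (eps < 1 / tau) by (pose proof (Rmin_r (1 / 2) (1 / tau)); lra).
    apply Rmult_lt_compat_r with (r := tau) in H; auto. unfold Rdiv in H. rewrite Rmult_1_l, Rinv_l in H; lra. }
  assert (Hmu : 0 < 1 - eps < 1) by lra.
  assert (Ea : 0 < (1 - eps) * tau) by (apply Rmult_lt_0_compat; lra).
  assert (Eb0 : (1 - (1 - eps)) * tau = eps * tau) by ring.
  assert (Eb : 0 < eps * tau) by (apply Rmult_lt_0_compat; lra).
  set (T1 := trigamma (eps * tau + 1)).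
  set (Ta := trigamma ((1 - eps) * tau)).
  set (Tt := trigamma tau).
  assert (HT1 : Rabs T1 <= K1) by (apply HK1; lra).
  assert (HTa : Rabs Ta <= Ka).
  { apply HKa. split. apply Rmult_le_reg_r with (/ tau). apply Rinv_0_lt_compat; lra.
    replace (tau / 2 * / tau) with (1 / 2) by (field; lra). replace ((1 - eps) * tau * / tau) with (1 - eps) by (field; lra). lra.
    assert ((1 - eps) * tau <= 1 * tau) by (apply Rmult_le_compat_r; lra). lra. }
  assert (HTt : Rabs Tt <= Ka) by (apply HKa; lra).
  assert (HTb : trigamma (eps * tau) = T1 + / (eps * tau) ^ 2) by (apply trigamma_rec; auto).
  assert (Ha_rng : 0 < (1 - eps) * tau <= tau).
  { split; auto. assert ((1 - eps) * tau <= 1 * tau) by (apply Rmult_le_compat_r; lra). lra. }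
  split.
  - unfold c_u.
    assert (HD : Derive (fun m => L_ICRM a0 b0 lam m tau) (1 - eps) =
       - tau * trigamma ((1 - eps) * tau) + lam * tau * (((1 - eps) * tau - a0) * trigamma ((1 - eps) * tau)
       - ((1 - (1 - eps)) * tau - b0) * trigamma ((1 - (1 - eps)) * tau))).
    { rewrite (Derive_ext_loc _ (Lm a0 b0 lam tau)).
      apply is_derive_unique. apply Lm_deriv; auto.
      apply filter_imp with (P := fun m => 0 < m < 1).
      intros m Hm. apply L_eq; apply Rmult_lt_0_compat; lra.
      apply locally_between; lra. }
    rewrite HD, Eb0, HTb. fold Ta.
    eapply Rle_trans with (r2 := Cu); [|lra].
    replace ((- tau * Ta + lam * tau * (((1 - eps) * tau - a0) * Ta - (eps * tau - b0) * (T1 + / (eps * tau) ^ 2))) *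
        ((1 - eps) * (1 - (1 - eps))) - lam * b0 / (eps * tau))
      with ((- tau) * Ta * ((1 - eps) * eps) + (lam * tau) * Ta * (((1 - eps) * tau - a0) * ((1 - eps) * eps))
            + (lam * tau) * T1 * (- ((eps * tau - b0) * ((1 - eps) * eps))) + (- (lam * (1 - eps))) + (- (lam * b0 / tau)))
      by (field; split; lra).
    eapply Rle_trans. apply abs5. unfold Cu.
    repeat apply Rplus_le_compat.
    + rewrite Rmult_assoc, Rabs_mult, Rabs_mult, Rabs_Ropp, (Rabs_right tau) by lra.
      rewrite (Rabs_right ((1 - eps) * eps)) by nra.
      assert (Rabs Ta * ((1 - eps) * eps) <= Ka * 1).
      { apply Rmult_le_compat; auto. apply Rabs_pos. nra. nra. }
      rewrite (Rmult_assoc tau Ka 1). apply Rmult_le_compat_l; lra.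
    + apply abs_prod_le. apply Rmult_le_pos; lra. exact HTa.
      apply Rabs_le. destruct Ha_rng as [Hr1 Hr2]. revert Hr1 Hr2. generalize ((1 - eps) * tau). intros a Hr1 Hr2.
      assert (Hp : 0 <= (1 - eps) * eps <= 1) by nra. revert Hp. generalize ((1 - eps) * eps). intros p Hp. nra.
    + apply abs_prod_le. apply Rmult_le_pos; lra. exact HT1.
      apply Rabs_le. assert (Hbt : eps * tau <= tau) by nra. revert Eb Hbt. generalize (eps * tau). intros b Hr1 Hr2.
      assert (Hp : 0 <= (1 - eps) * eps <= 1) by nra. revert Hp. generalize ((1 - eps) * eps). intros p Hp. nra.
    + rewrite Rabs_Ropp, Rabs_right by nra. nra.
    + rewrite Rabs_Ropp, Rabs_right. lra. apply Rle_ge. unfold Rdiv. apply Rmult_le_pos. nra. apply Rlt_le, Rinv_0_lt_compat; lra.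
  - unfold c_tau.
    assert (HD : Derive (fun t => L_ICRM a0 b0 lam (1 - eps) t) tau =
       - ((1 - eps) * trigamma ((1 - eps) * tau) - trigamma tau) + lam * (((1 - eps) * tau - a0) * ((1 - eps) * trigamma ((1 - eps) * tau) - trigamma tau)
       + ((1 - (1 - eps)) * tau - b0) * ((1 - (1 - eps)) * trigamma ((1 - (1 - eps)) * tau) - trigamma tau))).
    { rewrite (Derive_ext_loc _ (fun t => Lm a0 b0 lam t (1 - eps))).
      apply is_derive_unique. apply Lt_deriv; auto.
      apply filter_imp with (P := fun t => 0 < t).
      intros t Ht. apply L_eq; apply Rmult_lt_0_compat; lra.
      apply locally_pos; lra. }
    rewrite HD, Eb0, HTb. fold Ta Tt.
    eapply Rle_trans with (r2 := Ct); [|lra].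
    replace (- ((1 - eps) * Ta - Tt) + lam * (((1 - eps) * tau - a0) * ((1 - eps) * Ta - Tt) +
         (eps * tau - b0) * ((1 - (1 - eps)) * (T1 + / (eps * tau) ^ 2) - Tt)) + lam * b0 / (eps * tau ^ 2))
      with (1 * (- ((1 - eps) * Ta - Tt)) * 1 + lam * ((1 - eps) * Ta - Tt) * ((1 - eps) * tau - a0)
            + lam * T1 * ((eps * tau - b0) * eps) + lam / tau + lam * Tt * (- (eps * tau - b0)))
      by (field; split; lra).
    assert (HW : Rabs ((1 - eps) * Ta - Tt) <= 2 * Ka).
    { eapply Rle_trans. apply Rabs_triang. rewrite Rabs_Ropp, Rabs_mult, (Rabs_right (1 - eps)) by lra.
      assert ((1 - eps) * Rabs Ta <= 1 * Ka) by (apply Rmult_le_compat; try lra; apply Rabs_pos). lra. }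
    eapply Rle_trans. apply abs5. unfold Ct.
    repeat apply Rplus_le_compat.
    + apply abs_prod_le. lra. rewrite Rabs_Ropp. exact HW. rewrite Rabs_R1. lra.
    + apply abs_prod_le. lra. exact HW.
      apply Rabs_le. destruct Ha_rng as [Hr1 Hr2]. revert Hr1 Hr2. generalize ((1 - eps) * tau). intros a Hr1 Hr2. lra.
    + apply abs_prod_le. lra. exact HT1.
      apply Rabs_le. assert (Hbt : eps * tau <= tau) by nra. revert Eb Hbt. generalize (eps * tau). intros b Hr1 Hr2. nra.
    + rewrite Rabs_right. lra. apply Rle_ge. unfold Rdiv. apply Rmult_le_pos. lra. apply Rlt_le, Rinv_0_lt_compat; lra.
    + apply abs_prod_le. lra. exact HTt.
      apply Rabs_le. assert (Hbt : eps * tau <= tau) by nra. revert Eb Hbt. generalize (eps * tau). intros b Hr1 Hr2. lra.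
Qed.
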